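(* Let $X$ be a real Hilbert space, let $L\colon X\to X$ be linear and nonexpansive, let $b\in X$, and let $T\colon X\to X\colon x\mapsto Lx+b$. Let $v:=P_{\overline{\operatorname{ran}}(\mathrm{Id}-T)}0$ and suppose $v\in\operatorname{ran}(\mathrm{Id}-T)$. Let $x\in X$. Then: (i) $v=P_{\operatorname{Fix}L}(-b)\in\operatorname{Fix}L=(\operatorname{ran}(\mathrm{Id}-L))^\perp$, and $v\neq0\iff b\notin\operatorname{ran}(\mathrm{Id}-L)$; (ii) for all $n\in\mathbb N$, $T^nx=L^nx+\sum_{k=0}^{n-1}L^kb$; (iii) for all $n\in\mathbb N$, $T^nx+nv=L^nx+\sum_{k=0}^{n-1}L^kP_{\overline{\operatorname{ran}}(\mathrm{Id}-L)}b$; (iv) for all $n\in\mathbb N$, $(T_{-v})^nx=T^nx+nv$; (v) for all $n\in\mathbb N$, $(T_{-v})^nx=(v+T)^nx$; (vi) $\operatorname{Fix}(T_{-v})=-v+\operatorname{Fix}(T_{-v})=-v+\operatorname{Fix}(v+T)=\operatorname{Fix}(v+T)$; (vii) $\operatorname{Fix}(T_{-v})=\operatorname{Fix}(v+T)=\mathbb Rv+\operatorname{Fix}(v+T)=\mathbb Rv+\operatorname{Fix}(T_{-v})$; consequently $v$ lies in the lineality space of the affine subspace $\operatorname{Fix}(T_{-v})=\operatorname{Fix}(v+T)$.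
   Context: $\overline{\operatorname{ran}}(\mathrm{Id}-T)$ is the closure of the range of $\mathrm{Id}-T$ (a closed convex set, so $v$ is well-defined). $T_{-v}x:=T(x+v)$ and $(v+T)x:=v+Tx$. $\operatorname{Fix}$ denotes the fixed point set, $P_C$ the projection onto a closed convex set $C$. The lineality space of a convex set $C$ is the set of $d$ with $C+\mathbb Rd=C$. *)

(* Defs.v *)
From Stdlib Require Import Reals ClassicalEpsilon.
Open Scope R_scope.

Record HilbertSpace := {
  hs_car :> Type;
  hs_zero : hs_car;
  hs_add : hs_car -> hs_car -> hs_car;
  hs_opp : hs_car -> hs_car;
  hs_scal : R -> hs_car -> hs_car;
  hs_inner : hs_car -> hs_car -> R;
  hs_add_assoc : forall x y z, hs_add x (hs_add y z) = hs_add (hs_add x y) z;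
  hs_add_comm : forall x y, hs_add x y = hs_add y x;
  hs_add_0 : forall x, hs_add x hs_zero = x;
  hs_add_opp : forall x, hs_add x (hs_opp x) = hs_zero;
  hs_scal_assoc : forall a b x, hs_scal a (hs_scal b x) = hs_scal (a * b) x;
  hs_scal_1 : forall x, hs_scal 1 x = x;
  hs_scal_distr_l : forall a x y,
      hs_scal a (hs_add x y) = hs_add (hs_scal a x) (hs_scal a y);
  hs_scal_distr_r : forall a b x,
      hs_scal (a + b) x = hs_add (hs_scal a x) (hs_scal b x);
  hs_inner_sym : forall x y, hs_inner x y = hs_inner y x;
  hs_inner_add_l : forall x y z,
      hs_inner (hs_add x y) z = hs_inner x z + hs_inner y z;
  hs_inner_scal_l : forall a x y, hs_inner (hs_scal a x) y = a * hs_inner x y;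
  hs_inner_pos : forall x, 0 <= hs_inner x x;
  hs_inner_def : forall x, hs_inner x x = 0 -> x = hs_zero;
  hs_complete : forall u : nat -> hs_car,
      (forall eps, 0 < eps -> exists N, forall m n, (N <= m)%nat -> (N <= n)%nat ->
         sqrt (hs_inner (hs_add (u m) (hs_opp (u n))) (hs_add (u m) (hs_opp (u n)))) < eps) ->
      exists l, forall eps, 0 < eps -> exists N, forall n, (N <= n)%nat ->
         sqrt (hs_inner (hs_add (u n) (hs_opp l)) (hs_add (u n) (hs_opp l))) < eps
}.

Arguments hs_zero {h}.
Arguments hs_add {h} _ _.
Arguments hs_opp {h} _.
Arguments hs_scal {h} _ _.
Arguments hs_inner {h} _ _.

Section Ops.
Context {X : HilbertSpace}.

Definition vzero : X := hs_zero.
Definition vadd (x y : X) : X := hs_add x y.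
Definition vopp (x : X) : X := hs_opp x.
Definition vsub (x y : X) : X := hs_add x (hs_opp y).
Definition vscal (a : R) (x : X) : X := hs_scal a x.
Definition inner (x y : X) : R := hs_inner x y.
Definition norm (x : X) : R := sqrt (hs_inner x x).

Definition set_eq (A B : X -> Prop) : Prop := forall z, A z <-> B z.

Definition linear_op (L : X -> X) : Prop :=
  (forall x y, L (vadd x y) = vadd (L x) (L y)) /\
  (forall a x, L (vscal a x) = vscal a (L x)).
Definition nonexpansive (T : X -> X) : Prop :=
  forall x y, norm (vsub (T x) (T y)) <= norm (vsub x y).

Definition ran_id_minus (T : X -> X) (y : X) : Prop := exists x, y = vsub x (T x).
Definition closure (S : X -> Prop) (x : X) : Prop :=
  forall eps, 0 < eps -> exists y, S y /\ norm (vsub x y) < eps.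
Definition Fix (T : X -> X) (x : X) : Prop := T x = x.
Definition orth (S : X -> Prop) (x : X) : Prop := forall y, S y -> inner x y = 0.

Definition is_proj (C : X -> Prop) (x p : X) : Prop :=
  C p /\ forall c, C c -> norm (vsub x p) <= norm (vsub x c).
(** P_C x: the (chosen) nearest point of C to x; for a nonempty closed convex
    C in a Hilbert space it exists and is unique, so this is the projection. *)
Definition proj (C : X -> Prop) (x : X) : X :=
  epsilon (inhabits vzero) (fun p => is_proj C x p).

(** Shifted operators T_{-v} x := T (x + v) and (v + T) x := v + T x. *)
Definition shift_in (T : X -> X) (v : X) (x : X) : X := T (vadd x v).
Definition shift_out (v : X) (T : X -> X) (x : X) : X := vadd v (T x).

Definition iter (n : nat) (T : X -> X) (x : X) : X := Nat.iter n T x.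
Fixpoint vsum (n : nat) (f : nat -> X) : X :=
  match n with
  | O => vzero
  | S m => vadd (vsum m f) (f m)
  end.

Definition translate (a : X) (S : X -> Prop) (z : X) : Prop :=
  exists s, S s /\ z = vadd a s.
Definition line_plus (d : X) (S : X -> Prop) (z : X) : Prop :=
  exists t s, S s /\ z = vadd (vscal t d) s.

Definition affine_set (S : X -> Prop) : Prop :=
  forall x y t, S x -> S y -> S (vadd (vscal t x) (vscal (1 - t) y)).
Definition in_lineality (C : X -> Prop) (d : X) : Prop :=
  set_eq (line_plus d C) C.

End Ops.

(* Main.v *)
Require Import Defs.
From Stdlib Require Import Reals Lra Psatz ClassicalEpsilon Classical.
Open Scope R_scope.
Open Scope R_scope.

Section Vec.
Context {X : HilbertSpace}.
Implicit Types x y z a b w : X.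

Lemma vadd_assoc x y z : vadd x (vadd y z) = vadd (vadd x y) z.
Proof. apply hs_add_assoc. Qed.
Lemma vadd_comm x y : vadd x y = vadd y x. Proof. apply hs_add_comm. Qed.
Lemma vadd_0 x : vadd x vzero = x. Proof. apply hs_add_0. Qed.
Lemma vadd_opp x : vadd x (vopp x) = vzero. Proof. apply hs_add_opp. Qed.
Lemma vadd_0l x : vadd vzero x = x. Proof. rewrite vadd_comm; apply vadd_0. Qed.

Lemma vscal_0 x : vscal 0 x = vzero.
Proof.
  assert (H : vscal 0 x = vadd (vscal 0 x) (vscal 0 x)).
  { unfold vscal, vadd. rewrite <- hs_scal_distr_r. f_equal. ring. }
  assert (H2 := f_equal (fun u => vadd u (vopp (vscal 0 x))) H). simpl in H2.
  rewrite <- vadd_assoc, !vadd_opp, vadd_0 in H2. symmetry; exact H2.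
Qed.

Lemma opp_unique a b : vadd a b = vzero -> b = vopp a.
Proof. intro H. rewrite <- (vadd_0 b), <- (vadd_opp a), vadd_assoc, (vadd_comm b a), H, vadd_0l. reflexivity. Qed.

Lemma vopp_scal x : vopp x = vscal (-1) x.
Proof.
  symmetry; apply opp_unique. unfold vadd, vscal.
  rewrite <- (hs_scal_1 X x) at 1. rewrite <- hs_scal_distr_r.
  replace (1 + -1) with 0 by ring. apply vscal_0.
Qed.

Lemma inner_sym x y : inner x y = inner y x. Proof. apply hs_inner_sym. Qed.
Lemma inner_add_l x y z : inner (vadd x y) z = inner x z + inner y z.
Proof. apply hs_inner_add_l. Qed.
Lemma inner_add_r x y z : inner z (vadd x y) = inner z x + inner z y.
Proof. rewrite !(inner_sym z). apply inner_add_l. Qed.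
Lemma inner_scal_l t x y : inner (vscal t x) y = t * inner x y.
Proof. apply hs_inner_scal_l. Qed.
Lemma inner_scal_r t x y : inner y (vscal t x) = t * inner y x.
Proof. rewrite !(inner_sym y). apply inner_scal_l. Qed.
Lemma inner_opp_l x y : inner (vopp x) y = - inner x y.
Proof. rewrite vopp_scal, inner_scal_l; ring. Qed.
Lemma inner_opp_r x y : inner y (vopp x) = - inner y x.
Proof. rewrite vopp_scal, inner_scal_r; ring. Qed.
Lemma inner_0_l y : inner vzero y = 0.
Proof. rewrite <- (vscal_0 vzero), inner_scal_l; ring. Qed.
Lemma inner_0_r y : inner y vzero = 0.
Proof. rewrite inner_sym; apply inner_0_l. Qed.
Lemma inner_pos x : 0 <= inner x x. Proof. apply hs_inner_pos. Qed.
Lemma inner_def x : inner x x = 0 -> x = vzero. Proof. apply hs_inner_def. Qed.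

Lemma vsub_def a b : vsub a b = vadd a (vopp b). Proof. reflexivity. Qed.
Lemma vsub_eq a b : vsub a b = vzero -> a = b.
Proof.
  rewrite vsub_def; intro H.
  rewrite <- (vadd_0 a), <- (vadd_opp b), (vadd_comm b), vadd_assoc, H, vadd_0l.
  reflexivity.
Qed.

Lemma veq_by_inner a b : inner (vsub a b) (vsub a b) = 0 -> a = b.
Proof. intro H. apply vsub_eq, inner_def, H. Qed.
End Vec.

Ltac expand := repeat progress (rewrite ?vsub_def, ?inner_add_l, ?inner_add_r, ?inner_scal_l,
  ?inner_scal_r, ?inner_opp_l, ?inner_opp_r, ?inner_0_l, ?inner_0_r).
Ltac veq := apply veq_by_inner; rewrite ?vsub_def; expand; field.


Section Ana.
Context {X : HilbertSpace}.
Implicit Types x y z a b w : X.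

Lemma norm_def x : norm x = sqrt (inner x x). Proof. reflexivity. Qed.
Lemma norm_pos x : 0 <= norm x. Proof. apply sqrt_pos. Qed.
Lemma norm_sq x : norm x * norm x = inner x x.
Proof. apply sqrt_sqrt, inner_pos. Qed.

Lemma CS a w : inner a w <= norm a * norm w.
Proof.
  destruct (Req_dec (inner w w) 0) as [H0|H0].
  - apply inner_def in H0. subst w. rewrite inner_0_r.
    apply Rmult_le_pos; apply norm_pos.
  - set (p := inner a w). set (A := inner a a). set (W := inner w w).
    assert (HW : 0 < W) by (pose proof (inner_pos w); unfold W in *; lra).
    set (t := - p / W).
    assert (H := inner_pos (vadd a (vscal t w))). revert H; expand; intro H.
    rewrite (inner_sym w a) in H. fold p A W in H.
    assert (E : W * (A + t * p + t * (p + t * W)) = A * W - p * p)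
      by (unfold t; field; lra).
    assert (Hp : p * p <= A * W) by nra.
    unfold norm; change (hs_inner a a) with A; change (hs_inner w w) with W. rewrite <- sqrt_mult by (first [unfold A; apply inner_pos | lra]).
    destruct (Rle_lt_dec p 0). { pose proof (sqrt_pos (A*W)); lra. }
    rewrite <- (sqrt_square p) at 1 by lra. apply sqrt_le_1_alt; lra.
Qed.

Lemma triangle a w : norm (vadd a w) <= norm a + norm w.
Proof.
  assert (H := CS a w). pose proof (norm_sq a). pose proof (norm_sq w).
  pose proof (norm_pos a). pose proof (norm_pos w).
  rewrite (norm_def (vadd a w)). rewrite <- (sqrt_square (norm a + norm w)) by lra.
  apply sqrt_le_1_alt. expand. rewrite (inner_sym w a). nra.
Qed.

Lemma norm_sub_sym a b : norm (vsub a b) = norm (vsub b a).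
Proof. rewrite !norm_def. f_equal. expand. ring. Qed.

Lemma norm_sub0 a : norm (vsub vzero a) = norm a.
Proof. rewrite !norm_def. f_equal. expand. ring. Qed.

Lemma norm_le_inner a b : norm a <= norm b -> inner a a <= inner b b.
Proof. intro H. apply sqrt_le_0; auto using inner_pos. Qed.
End Ana.

Lemma inv_small (N m : nat) (e : R) : (0 < N)%nat -> / INR N < e -> (N <= m)%nat -> / INR (S m) < e.
Proof.
  intros H0 H1 H2. apply Rle_lt_trans with (/ INR N); auto.
  apply Rinv_le_contravar. apply lt_0_INR; lia. apply le_INR; lia.
Qed.

Section Proj.
Context {X : HilbertSpace}.

Lemma proj_exists (C0 : X -> Prop) (s0 : X) (Hs0 : C0 s0)
  (Hmid : forall a b, C0 a -> C0 b -> C0 (vadd (vscal (1/2) a) (vscal (1/2) b))) :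
  exists l, is_proj (closure C0) vzero l.
Proof.
  set (E := fun r => exists s, C0 s /\ r = - norm s).
  assert (hb : bound E).
  { exists 0. intros r [s [_ ->]]. pose proof (norm_pos s). lra. }
  assert (hne : exists r, E r) by (exists (- norm s0); exists s0; auto).
  destruct (completeness E hb hne) as [m [Hub Hleast]].
  set (d := - m).
  assert (Hd0 : 0 <= d).
  { assert (m <= 0). { apply Hleast. intros r [s [_ ->]]. pose proof (norm_pos s). lra. }
    unfold d; lra. }
  assert (Hlow : forall s, C0 s -> d <= norm s).
  { intros s Hs. assert (- norm s <= m) by (apply Hub; exists s; auto). unfold d; lra. }
  assert (Happrox : forall e, 0 < e -> exists s, C0 s /\ norm s < d + e).
  { intros e He. apply NNPP; intro Hn.
    assert (Hu : is_upper_bound E (m - e)).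
    { intros r [s [Hs ->]]. destruct (Rlt_le_dec (norm s) (d + e)).
      - exfalso; apply Hn; eauto.
      - unfold d in *; lra. }
    apply Hleast in Hu. lra. }
  set (u := fun n : nat => epsilon (inhabits vzero)
              (fun s => C0 s /\ norm s < d + / INR (S n))).
  assert (Hu : forall n, C0 (u n) /\ norm (u n) < d + / INR (S n)).
  { intro n. unfold u. apply epsilon_spec, Happrox, Rinv_0_lt_compat, lt_0_INR; lia. }
  assert (Hkey : forall p q, inner (vsub (u p) (u q)) (vsub (u p) (u q)) <=
            2 * ((d + / INR (S p)) * (d + / INR (S p))) +
            2 * ((d + / INR (S q)) * (d + / INR (S q))) - 4 * (d * d)).
  { intros p q. destruct (Hu p) as [Hp1 Hp2]. destruct (Hu q) as [Hq1 Hq2].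
    set (a := u p) in *. set (b := u q) in *.
    set (w := vadd (vscal (1/2) a) (vscal (1/2) b)).
    assert (Hw := Hlow w (Hmid a b Hp1 Hq1)).
    pose proof (norm_sq w). pose proof (norm_sq a). pose proof (norm_sq b).
    pose proof (norm_pos a). pose proof (norm_pos b).
    assert (Par : inner (vsub a b) (vsub a b) + 4 * inner w w = 2 * inner a a + 2 * inner b b)
      by (unfold w; expand; field).
    nra. }
  assert (Hcauchy : forall eps, 0 < eps -> exists N, forall p q, (N <= p)%nat -> (N <= q)%nat ->
            norm (vsub (u p) (u q)) < eps).
  { intros eps Heps.
    set (e := Rmin 1 (eps * eps / (8 * d + 5))).
    assert (He0 : 0 < e).
    { unfold e. apply Rmin_pos. lra. apply Rdiv_lt_0_compat; nra. }
    assert (He1 : e <= 1) by apply Rmin_l.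
    assert (He2 : e <= eps * eps / (8 * d + 5)) by apply Rmin_r.
    assert (He3 : (8 * d + 5) * e <= eps * eps).
    { apply Rmult_le_compat_l with (r := 8*d+5) in He2; [|lra].
      replace ((8 * d + 5) * (eps * eps / (8 * d + 5))) with (eps*eps) in He2 by (field; lra).
      exact He2. }
    destruct (archimed_cor1 e He0) as [N [HN HN0]].
    exists N. intros p q Hp Hq.
    pose proof (inv_small N p e HN0 HN Hp). pose proof (inv_small N q e HN0 HN Hq).
    assert (0 < / INR (S p)) by (apply Rinv_0_lt_compat, lt_0_INR; lia).
    assert (0 < / INR (S q)) by (apply Rinv_0_lt_compat, lt_0_INR; lia).
    specialize (Hkey p q).
    assert (Hlt : inner (vsub (u p) (u q)) (vsub (u p) (u q)) < eps * eps) by nra.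
    rewrite norm_def, <- (sqrt_square eps) by lra.
    apply sqrt_lt_1_alt. split; [apply inner_pos | exact Hlt]. }
  destruct (hs_complete X u Hcauchy) as [l Hl].
  assert (Hl' : forall eps, 0 < eps -> exists N, forall n, (N <= n)%nat -> norm (vsub (u n) l) < eps)
    by exact Hl.
  exists l. split.
  - intros eps Heps. destruct (Hl' eps Heps) as [N HN]. exists (u N). split.
    apply Hu. rewrite norm_sub_sym. apply HN; lia.
  - intros c Hc. rewrite !norm_sub0.
    assert (H1 : norm l <= d).
    { apply Rle_plus_epsilon. intros eps He.
      destruct (Hl' (eps/2)) as [N1 HN1]; [lra|].
      destruct (archimed_cor1 (eps/2)) as [N2 [HN2 HN20]]; [lra|].
      set (n := max N1 N2).
      pose proof (inv_small N2 n (eps/2) HN20 HN2 (Nat.le_max_r _ _)).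
      assert (Hn : norm (vsub (u n) l) < eps/2) by (apply HN1; apply Nat.le_max_l).
      rewrite norm_sub_sym in Hn.
      assert (Heq : l = vadd (u n) (vsub l (u n))) by veq.
      pose proof (triangle (u n) (vsub l (u n))). rewrite <- Heq in H0.
      destruct (Hu n). lra. }
    assert (H2 : d <= norm c).
    { apply Rle_plus_epsilon. intros eps He.
      destruct (Hc eps He) as [y [Hy Hcy]].
      assert (Heq : y = vadd c (vsub y c)) by veq.
      pose proof (triangle c (vsub y c)). rewrite <- Heq in H.
      rewrite norm_sub_sym in Hcy. pose proof (Hlow y Hy). lra. }
    lra.
Qed.
End Proj.

Ltac symnorm := repeat match goal with
 | |- context [inner ?x ?y] => match goal with
     | |- context [inner y x] => tryif constr_eq x y then fail else rewrite (inner_sym y x)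
     end
 end.
Ltac ex := expand; symnorm.

Lemma quad_zero (p q : R) : (forall t, 2 * t * p <= t * t * q) -> p = 0.
Proof.
  intro H. set (k := Rabs q + 1).
  assert (Hk : 0 < k) by (unfold k; pose proof (Rabs_pos q); lra).
  specialize (H (p / k)).
  apply Rmult_le_compat_l with (r := k * k) in H; [|nra].
  replace (k * k * (2 * (p / k) * p)) with (2 * p * p * k) in H by (field; lra).
  replace (k * k * (p / k * (p / k) * q)) with (p * p * q) in H by (field; lra).
  pose proof (Rle_abs q). unfold k in *. nra.
Qed.

Section Main.
Context {X : HilbertSpace}.

Lemma min_orth (v w : X) :
  (forall t, inner v v <= inner (vadd v (vscal t w)) (vadd v (vscal t w))) -> inner v w = 0.
Proof.
  intro H. apply quad_zero with (q := inner w w). intro t. specialize (H (-t)).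
  revert H; ex; intro H; nra.
Qed.

Lemma norm_sub0r (a : X) : norm (vsub a vzero) = norm a.
Proof. rewrite !norm_def. f_equal. expand. ring. Qed.

Lemma norm_self (a : X) : norm (vsub a a) = 0.
Proof. rewrite norm_def. replace (inner (vsub a a) (vsub a a)) with 0 by (expand; ring). apply sqrt_0. Qed.

Lemma closure_incl (C : X -> Prop) a : C a -> closure C a.
Proof. intros Ha eps He. exists a. rewrite norm_self. auto. Qed.

Lemma iter_ext (f g : X -> X) : (forall y, f y = g y) -> forall n y, iter n f y = iter n g y.
Proof. intros H n y. unfold iter. induction n; simpl; [reflexivity|]. rewrite IHn; apply H. Qed.

End Main.

Theorem theorem3p2 (X : HilbertSpace) (L : X -> X) (b : X)
  (HL : linear_op L) (HLne : nonexpansive L)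
  (T : X -> X) (HT : forall x, T x = vadd (L x) b)
  (v : X) (Hv : v = proj (closure (ran_id_minus T)) vzero)
  (Hvran : ran_id_minus T v)
  (x : X) :
  (* (i) *)
  (v = proj (Fix L) (vopp b) /\ Fix L v /\
   set_eq (Fix L) (orth (ran_id_minus L)) /\
   (v <> vzero <-> ~ ran_id_minus L b)) /\
  (* (ii) *)
  (forall n : nat, iter n T x = vadd (iter n L x) (vsum n (fun k => iter k L b))) /\
  (* (iii) *)
  (forall n : nat, vadd (iter n T x) (vscal (INR n) v) =
     vadd (iter n L x)
          (vsum n (fun k => iter k L (proj (closure (ran_id_minus L)) b)))) /\
  (* (iv) *)
  (forall n : nat, iter n (shift_in T v) x = vadd (iter n T x) (vscal (INR n) v)) /\
  (* (v) *)
  (forall n : nat, iter n (shift_in T v) x = iter n (shift_out v T) x) /\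
  (* (vi) *)
  (set_eq (Fix (shift_in T v)) (translate (vopp v) (Fix (shift_in T v))) /\
   set_eq (translate (vopp v) (Fix (shift_in T v)))
          (translate (vopp v) (Fix (shift_out v T))) /\
   set_eq (translate (vopp v) (Fix (shift_out v T))) (Fix (shift_out v T))) /\
  (* (vii) *)
  (set_eq (Fix (shift_in T v)) (Fix (shift_out v T)) /\
   set_eq (Fix (shift_out v T)) (line_plus v (Fix (shift_out v T))) /\
   set_eq (line_plus v (Fix (shift_out v T))) (line_plus v (Fix (shift_in T v))) /\
   affine_set (Fix (shift_in T v)) /\
   in_lineality (Fix (shift_in T v)) v).
Proof.
  destruct HL as [HLadd HLscal].
  assert (HL0 : L vzero = vzero).
  { rewrite <- (vscal_0 vzero), HLscal, !vscal_0. reflexivity. }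
  assert (HLopp : forall y, L (vopp y) = vopp (L y)).
  { intro y. rewrite !vopp_scal, HLscal. reflexivity. }
  assert (HLsub : forall y z, L (vsub y z) = vsub (L y) (L z)).
  { intros y z. rewrite !vsub_def, HLadd, HLopp. reflexivity. }
  assert (Hnn : forall y, inner (L y) (L y) <= inner y y).
  { intro y. apply norm_le_inner. pose proof (HLne y vzero) as H.
    rewrite HL0, !norm_sub0r in H. exact H. }
  assert (FixOrth : forall z, Fix L z <-> orth (ran_id_minus L) z).
  { intro z. split.
    - intros Hz y [w ->].
      assert (Hq : inner z (L w) - inner z w = 0).
      { apply quad_zero with (q := inner w w - inner (L w) (L w)). intro t.
        pose proof (Hnn (vadd z (vscal t w))) as H.
        rewrite HLadd, HLscal in H. unfold Fix in Hz. rewrite Hz in H.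
        revert H; ex; intro H; nra. }
      ex. lra.
    - intro Hz. unfold Fix. apply veq_by_inner. apply Rle_antisym; [|apply inner_pos].
      assert (H1 : inner z (vsub z (L z)) = 0) by (apply Hz; exists z; reflexivity).
      pose proof (Hnn z). revert H1; ex; intro H1. lra. }
  set (Sset := ran_id_minus T).
  assert (Hmid : forall a c, Sset a -> Sset c -> Sset (vadd (vscal (1/2) a) (vscal (1/2) c))).
  { intros a c [z1 ->] [z2 ->]. exists (vadd (vscal (1/2) z1) (vscal (1/2) z2)).
    rewrite !HT, HLadd, !HLscal. veq. }
  assert (Hproj : is_proj (closure Sset) vzero v).
  { destruct (proj_exists Sset v Hvran Hmid) as [l Hl].
    rewrite Hv. unfold proj. apply epsilon_spec. exists l. exact Hl. }
  assert (Hmin : forall s, Sset s -> inner v v <= inner s s).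
  { intros s Hs. apply norm_le_inner. destruct Hproj as [_ Hp].
    rewrite <- (norm_sub0 v), <- (norm_sub0 s). apply Hp. apply closure_incl, Hs. }
  destruct Hvran as [z0 Hz0].
  assert (Hvorth : forall y, inner v (vsub y (L y)) = 0).
  { intro y. apply min_orth. intro t. apply Hmin.
    exists (vadd z0 (vscal t y)).
    rewrite HT, HLadd, HLscal, Hz0, HT. veq. }
  assert (HFixv : Fix L v).
  { apply FixOrth. intros w [y ->]. apply Hvorth. }
  assert (Hvb : ran_id_minus L (vadd b v)).
  { exists z0. rewrite Hz0, HT. veq. }
  assert (Edist : forall f, Fix L f -> inner (vsub (vopp b) f) (vsub (vopp b) f) =
             inner (vsub (vopp b) v) (vsub (vopp b) v) + inner (vsub v f) (vsub v f)).
  { intros f Hf.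
    assert (Ho : inner (vsub v f) (vadd b v) = 0).
    { apply (proj1 (FixOrth (vsub v f))).
      - unfold Fix. rewrite HLsub. rewrite HFixv. unfold Fix in Hf. rewrite Hf. reflexivity.
      - exact Hvb. }
    revert Ho. ex. intro Ho. lra. }
  assert (Hi1 : v = proj (Fix L) (vopp b)).
  { assert (Hisv : is_proj (Fix L) (vopp b) v).
    { split; [exact HFixv|]. intros f Hf. rewrite !norm_def. apply sqrt_le_1_alt.
      rewrite (Edist f Hf). pose proof (inner_pos (vsub v f)). lra. }
    assert (Hp : is_proj (Fix L) (vopp b) (proj (Fix L) (vopp b))).
    { unfold proj. apply epsilon_spec. exists v. exact Hisv. }
    destruct Hp as [Hp1 Hp2]. specialize (Hp2 v HFixv).
    apply norm_le_inner in Hp2. rewrite (Edist _ Hp1) in Hp2.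
    apply veq_by_inner. apply Rle_antisym; [|apply inner_pos]. lra. }
  assert (iterL_add : forall n a c, iter n L (vadd a c) = vadd (iter n L a) (iter n L c)).
  { intros n a c. unfold iter. induction n; simpl; [reflexivity|]. rewrite IHn, HLadd. reflexivity. }
  assert (iterL_fix : forall n, iter n L v = v).
  { intro n. unfold iter. induction n; simpl; [reflexivity|]. rewrite IHn. exact HFixv. }
  assert (Hii : forall n y, iter n T y = vadd (iter n L y) (vsum n (fun k => iter k L b))).
  { induction n; intro y.
    - simpl. rewrite vadd_0. reflexivity.
    - unfold iter in *. rewrite !Nat.iter_succ_r, IHn, HT, iterL_add.
      change (vsum (S n) (fun k => Nat.iter k L b))
        with (vadd (vsum n (fun k => Nat.iter k L b)) (Nat.iter n L b)).
      veq. }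
  set (M := closure (ran_id_minus L)).
  assert (Horthcl : forall c, M c -> inner v c = 0).
  { intros c Hc.
    assert (Hb : forall eps, 0 < eps -> Rabs (inner v c) <= eps).
    { intros eps He.
      assert (Hd : 0 < eps / (norm v + 1)) by (pose proof (norm_pos v); apply Rdiv_lt_0_compat; lra).
      destruct (Hc _ Hd) as [y [[w ->] Hy]].
      assert (E1 : inner v c = inner v (vsub c (vsub w (L w)))) by (pose proof (Hvorth w) as Hw; revert Hw; ex; intro Hw; lra).
      pose proof (CS v (vsub c (vsub w (L w)))) as C1.
      pose proof (CS (vopp v) (vsub c (vsub w (L w)))) as C2.
      assert (Nv : norm (vopp v) = norm v) by (rewrite !norm_def; f_equal; expand; ring).
      rewrite Nv, inner_opp_l in C2.
      pose proof (norm_pos v).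
      assert (H3 : norm v * norm (vsub c (vsub w (L w))) <= norm v * (eps / (norm v + 1)))
        by (apply Rmult_le_compat_l; lra).
      assert (H4 : norm v * (eps / (norm v + 1)) <= eps).
      { apply Rmult_le_reg_r with (norm v + 1); [lra|].
        replace (norm v * (eps / (norm v + 1)) * (norm v + 1)) with (norm v * eps) by (field; lra).
        nra. }
      apply Rabs_le. lra. }
    destruct (Req_dec (inner v c) 0) as [|Hne]; auto.
    exfalso. specialize (Hb (Rabs (inner v c) / 2)).
    pose proof (Rabs_pos_lt _ Hne). lra. }
  assert (E2 : forall c, inner (vsub b c) (vsub b c) =
     inner (vsub b (vadd b v)) (vsub b (vadd b v)) + inner (vsub (vadd b v) c) (vsub (vadd b v) c)
     - 2 * inner v (vadd b v) + 2 * inner v c).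
  { intro c. ex. ring. }
  assert (Hvbv : inner v (vadd b v) = 0) by (apply Horthcl, closure_incl, Hvb).
  assert (HP : proj M b = vadd b v).
  { assert (Hisp : is_proj M b (vadd b v)).
    { split; [apply closure_incl, Hvb|]. intros c Hc. rewrite !norm_def.
      apply sqrt_le_1_alt. rewrite (E2 c), Hvbv, (Horthcl c Hc).
      pose proof (inner_pos (vsub (vadd b v) c)). lra. }
    assert (Hp : is_proj M b (proj M b)).
    { unfold proj. apply epsilon_spec. exists (vadd b v). exact Hisp. }
    destruct Hp as [Hp1 Hp2]. specialize (Hp2 _ (proj1 Hisp)).
    apply norm_le_inner in Hp2. rewrite (E2 (proj M b)), Hvbv, (Horthcl _ Hp1) in Hp2.
    symmetry. apply veq_by_inner. apply Rle_antisym; [|apply inner_pos]. lra. }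
  assert (Hsum : forall n, vsum n (fun k => iter k L (vadd b v)) =
                  vadd (vsum n (fun k => iter k L b)) (vscal (INR n) v)).
  { induction n.
    - simpl. veq.
    - change (vsum (S n) (fun k => iter k L (vadd b v)))
        with (vadd (vsum n (fun k => iter k L (vadd b v))) (iter n L (vadd b v))).
      change (vsum (S n) (fun k => iter k L b))
        with (vadd (vsum n (fun k => iter k L b)) (iter n L b)).
      rewrite IHn, iterL_add, iterL_fix, S_INR. veq. }
  assert (Hshift : forall y, shift_in T v y = shift_out v T y).
  { intro y. unfold shift_in, shift_out. rewrite !HT, HLadd. unfold Fix in HFixv. rewrite HFixv. veq. }
  assert (Hout : forall n y, iter n (shift_out v T) y = vadd (iter n T y) (vscal (INR n) v)).
  { intros n y. induction n.
    - simpl. veq.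
    - unfold iter in *. rewrite S_INR, !Nat.iter_succ, IHn. unfold shift_out.
      rewrite !HT, HLadd, HLscal. unfold Fix in HFixv. rewrite HFixv. veq. }
  set (G := Fix (shift_in T v)). set (F := Fix (shift_out v T)).
  assert (HGF : forall z, G z <-> F z).
  { intro z. unfold G, F, Fix. rewrite Hshift. tauto. }
  assert (HFform : forall z, F z <-> vadd v (vadd (L z) b) = z).
  { intro z. unfold F, Fix, shift_out. rewrite HT. tauto. }
  assert (HFline : forall z t, F z -> F (vadd (vscal t v) z)).
  { intros z t Hz. apply HFform. apply HFform in Hz.
    rewrite HLadd, HLscal. unfold Fix in HFixv. rewrite HFixv.
    transitivity (vadd (vscal t v) (vadd v (vadd (L z) b))); [veq|rewrite Hz; reflexivity]. }
  assert (HGline : forall z t, G z -> G (vadd (vscal t v) z)).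
  { intros z t Hz. apply HGF. apply HFline. apply HGF. exact Hz. }
  assert (Htr : forall P : X -> Prop, (forall z t, P z -> P (vadd (vscal t v) z)) ->
             set_eq P (translate (vopp v) P)).
  { intros P HP' z. split.
    - intro Hz. exists (vadd (vscal 1 v) z). split; [apply HP', Hz| veq].
    - intros [s [Hs ->]]. replace (vadd (vopp v) s) with (vadd (vscal (-1) v) s) by veq.
      apply HP', Hs. }
  assert (Hlp : forall P : X -> Prop, (forall z t, P z -> P (vadd (vscal t v) z)) ->
             set_eq P (line_plus v P)).
  { intros P HP' z. split.
    - intro Hz. exists 0, z. split; [exact Hz| veq].
    - intros [t [s [Hs ->]]]. apply HP', Hs. }
  split; [|split; [|split; [|split; [|split; [|split]]]]].
  -
    split; [exact Hi1|]. split; [exact HFixv|]. split; [exact FixOrth|].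
    split.
    + intros Hv0 [z Hz]. apply Hv0. apply inner_def. apply Rle_antisym; [|apply inner_pos].
      assert (H0 : Sset vzero) by (exists z; rewrite HT, Hz; veq).
      pose proof (Hmin _ H0). rewrite inner_0_l in H. exact H.
    + intros Hnb Hv0. apply Hnb. rewrite Hv0, vadd_0 in Hvb. exact Hvb.
  - intro n. apply Hii.
  - intro n. fold M. rewrite HP, Hsum, Hii. veq.
  - intro n. rewrite (iter_ext _ _ Hshift). apply Hout.
  - intro n. apply iter_ext, Hshift.
  - split; [|split].
    + apply Htr, HGline.
    + intro z. split; intros [s [Hs ->]]; exists s; split; auto; apply HGF; auto.
    + intro z. symmetry. apply Htr, HFline.
  - split; [|split; [|split; [|split]]].
    + exact HGF.
    + apply Hlp, HFline.
    + intro z. split; intros [t [s [Hs ->]]]; exists t, s; split; auto; apply HGF; auto.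
    + intros y z t Hy Hz. apply HGF. apply HGF in Hy. apply HGF in Hz.
      apply HFform in Hy. apply HFform in Hz. apply HFform.
      rewrite HLadd, !HLscal.
      transitivity (vadd (vscal t (vadd v (vadd (L y) b))) (vscal (1 - t) (vadd v (vadd (L z) b))));
        [veq | rewrite Hy, Hz; reflexivity].
    + intro z. symmetry. apply Hlp, HGline.
Qed.
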